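(* Let $\rho:\mathbb Z^s\to GL(k,\mathbb Z)$ be a special homomorphism and let $f_1,f_2:G_{s,k}(\rho)\to\mathbb Z^s$ be epimorphisms. Then there is an isomorphism $\psi:\mathbb Z^s\to\mathbb Z^s$ such that $f_2=\psi\circ f_1$.
   Context: $G_{s,k}(\rho)$ is the semidirect product $\mathbb Z^s\ltimes\mathbb Z^k$ with multiplication $(g,v)(h,w)=(g+h,v+\rho(g)w)$. $\rho$ is special if there is $g\in\mathbb Z^s$ such that $1$ is not an eigenvalue of $\rho(g)$. *)

(* Defs.v *)
(* Z^s = 'rV[int]_s, Z^k = 'cV[int]_k (column vectors, so
   that rho g acts by left matrix multiplication). *)
From mathcomp Require Import all_boot all_order all_algebra.
Set Implicit Arguments. Unset Strict Implicit. Unset Printing Implicit Defensive.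
Import GRing.Theory Num.Theory.
Local Open Scope ring_scope.

Definition is_GL_rep (s k : nat) (rho : 'rV[int]_s -> 'M[int]_k) : Prop :=
  [/\ forall g, rho g \in unitmx,
      rho 0 = 1%:M &
      forall g h, rho (g + h) = rho g *m rho h].

(* rho is special: some rho(g) does not have 1 as an eigenvalue
   (eigenvalues taken over Q, equivalently over C since 1 is rational). *)
Definition special (s k : nat) (rho : 'rV[int]_s -> 'M[int]_k) : Prop :=
  exists g, ~~ eigenvalue (map_mx (intr : int -> rat) (rho g)) 1.

Definition Gcarrier (s k : nat) := ('rV[int]_s * 'cV[int]_k)%type.

Definition Gmul (s k : nat) (rho : 'rV[int]_s -> 'M[int]_k)
  (x y : Gcarrier s k) : Gcarrier s k :=
  (x.1 + y.1, x.2 + rho x.1 *m y.2).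

Definition is_epi (s k : nat) (rho : 'rV[int]_s -> 'M[int]_k)
  (f : Gcarrier s k -> 'rV[int]_s) : Prop :=
  (forall x y, f (Gmul rho x y) = f x + f y) /\
  (forall z, exists x, f x = z).

Definition is_aut (s : nat) (psi : 'rV[int]_s -> 'rV[int]_s) : Prop :=
  (forall a b, psi (a + b) = psi a + psi b) /\ bijective psi.

(* Main.v *)
Require Import Defs.
From mathcomp Require Import all_boot all_order all_algebra.
Import GRing.Theory Num.Theory.
Local Open Scope ring_scope.

Lemma addf_scale (m n p q : nat) (h : 'M[int]_(m,n) -> 'M[int]_(p,q)) :
  (forall a b, h (a + b) = h a + h b) -> forall (z : int) a, h (z *: a) = z *: h a.
Proof.
move=> H.
have h0 : h 0 = 0.
  have E := H 0 0; rewrite addr0 in E.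
  by move/(congr1 (fun t => t - h 0)): E; rewrite subrr addrK.
have hN : forall a, h (- a) = - h a.
  move=> a; apply/eqP; rewrite -addr_eq0 addrC -H subrr h0 //.
have hn : forall a k, h (a *+ k) = h a *+ k.
  by move=> a; elim=> [|k IH]; rewrite ?mulr0n ?h0 // !mulrS H IH.
move=> [k|k] a.
  by rewrite -natz !scaler_nat hn.
by rewrite NegzE !scaleNr hN -natz !scaler_nat hn.
Qed.

Lemma epi_form (s k : nat) (rho : 'rV[int]_s -> 'M[int]_k)
  (f : Gcarrier s k -> 'rV[int]_s) :
  is_GL_rep rho -> special rho -> is_epi rho f ->
  exists M : 'M[int]_s, (forall x, f x = x.1 *m M) /\
    exists X : 'M[int]_s, X *m M = 1%:M.
Proof.
move=> [_ rho0 _] [g0 Hg0] [Hm Hs].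
have Hdec : forall x : Gcarrier s k, f x = f (0, x.2) + f (x.1, 0).
  move=> [g v] /=; rewrite -Hm /Gmul /= add0r mulmx0 addr0 //.
have Hv : forall v w, f (0, v + w) = f (0, v) + f (0, w).
  by move=> v w; rewrite -Hm /Gmul /= addr0 rho0 mul1mx.
have Hg : forall g h, f (g + h, 0) = f (g, 0) + f (h, 0).
  by move=> g h; rewrite -Hm /Gmul /= mulmx0 addr0.
have Hconj : forall g w, f (0, rho g *m w) = f (0, w).
  move=> g w.
  have E1 : f (g, rho g *m w) = f (g, 0) + f (0, w).
    by rewrite -Hm /Gmul /= addr0 add0r.
  have E2 := Hdec (g, rho g *m w); rewrite /= E1 addrC in E2.
  by move/addIr: E2.
pose A := rho g0 - 1%:M.
have detA : \det A != 0.
  move: Hg0; apply: contraNneq => dA.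
  rewrite /eigenvalue /= /eigenspace kermx_eq0 row_free_unit unitmxE.
  have -> : map_mx (intr : int -> rat) (rho g0) - (1 : rat)%:M = map_mx intr A.
    by rewrite /A map_mxB /= map_mx1.
  by rewrite det_map_mx dA rmorph0 unitr0.
have Hfv : forall v, f (0, v) = 0.
  move=> v.
  have HA : forall w, f (0, A *m w) = 0.
    move=> w; rewrite /A mulmxBl mul1mx.
    have := Hv (rho g0 *m w - w) w; rewrite subrK Hconj.
    move/(congr1 (fun t => t - f (0, w))); rewrite subrr addrK => <- //.
  have := HA (\adj A *m v); rewrite mulmxA mul_mx_adj mul_scalar_mx.
  rewrite (@addf_scale _ _ _ _ (fun v => f (0, v)) Hv) //.
  by move/eqP; rewrite scalemx_eq0 (negPf detA) /= => /eqP.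
pose phi := fun g => f (g, 0).
have Hphi : forall g, f (g, 0) = phi g by [].
have Hsc := @addf_scale _ _ _ _ phi Hg.
pose M := \matrix_(i < s) phi 'e_i.
have HM : forall g, phi g = g *m M.
  move=> g; rewrite {1}(row_sum_delta g) mulmx_sum_row.
  have phi0 : phi 0 = 0 by have := Hsc 0 0; rewrite !scale0r.
  elim/big_ind2: _ => //.
    by move=> x1 x2 y1 y2 <- <-; rewrite /phi Hg.
  by move=> i _; rewrite Hsc rowK.
exists M; split.
  by move=> x; rewrite Hdec Hfv add0r; exact: HM.
have Hsurj : forall i : 'I_s, exists u : 'rV[int]_s, u *m M = 'e_i.
  move=> i; have [x Hx] := Hs 'e_i; exists x.1.
  by rewrite -Hx Hdec Hfv add0r; exact/esym/HM.
have [u Hu] := fin_all_exists Hsurj.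
exists (\matrix_(i < s) u i).
apply/row_matrixP => i; rewrite row_mul rowK Hu row1 //.
Qed.

Theorem lemma6p8 (s k : nat) (rho : 'rV[int]_s -> 'M[int]_k)
  (f1 f2 : Gcarrier s k -> 'rV[int]_s) :
  is_GL_rep rho -> special rho -> is_epi rho f1 -> is_epi rho f2 ->
  exists psi : 'rV[int]_s -> 'rV[int]_s,
    is_aut psi /\ forall x, f2 x = psi (f1 x).
Proof.
move=> Hr Hsp H1 H2.
have [M1 [E1 [X HX]]] := @epi_form _ _ _ _ Hr Hsp H1.
have [M2 [E2 [Y HY]]] := @epi_form _ _ _ _ Hr Hsp H2.
have HX' := mulmx1C HX; have HY' := mulmx1C HY.
exists (fun y => y *m X *m M2); split.
  split; first by move=> a b; rewrite !mulmxDl.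
  exists (fun z => z *m Y *m M1) => y.
    by rewrite -!mulmxA (mulmxA M2 Y) HY' mul1mx HX mulmx1.
  by rewrite -!mulmxA (mulmxA M1 X) HX' mul1mx HY mulmx1.
by move=> x; rewrite E1 E2 -!mulmxA (mulmxA M1 X) HX' mul1mx.
Qed.
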